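(* For every positive integer $B$, every max-min $B$-bounded space algorithm $ALG$ for the classic bin packing problem, and every positive integer $m$ with $m\ge 2B$ and $m$ divisible by $3$, there exists a sorted item sequence $I$ such that $OPT(I)=m$ and $ALG(I)\ge\frac{7}{6}\cdot OPT(I)-B$.
   Context: Classic bin packing: an item sequence $I=(a_1,\dots,a_n)\in(0,1]^n$ must be packed into bins of capacity $1$; $OPT(I)$ is the minimum number of non-empty bins, $ALG(I)$ the number of non-empty bins used by algorithm $ALG$. $I$ is sorted if $a_1\ge\cdots\ge a_n$. A max-min algorithm first sorts the input in non-increasing order and then repeatedly takes either the head (largest) or the tail (smallest) item of the currently remaining sorted sequence and packs it into a bin, each decision depending only on the items already packed and the current head and tail items, without seeing other remaining items. A bin is open if it contains an item and the algorithm may still pack items into it; closed bins never receive further items. A $B$-bounded space algorithm keeps at most $B$ open bins at any time. *)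

(* Defs.v *)
From HB Require Import structures.
From mathcomp Require Import all_boot all_order all_algebra.
From mathcomp Require Import reals.
Set Implicit Arguments. Unset Strict Implicit. Unset Printing Implicit Defensive.
Import Order.TTheory GRing.Theory Num.Theory.
Local Open Scope ring_scope.

Section BinPacking.
Variable R : realType.

Definition valid_items (I : seq R) : bool := all (fun x => (0 < x) && (x <= 1)) I.

Definition sorted_items (I : seq R) : bool := sorted (fun x y => y <= x) I.

Definition packable (I : seq R) (k : nat) : Prop :=
  exists f : 'I_(size I) -> 'I_k,
    forall j : 'I_k, \sum_(i < size I | f i == j) I`_i <= 1.

Definition is_OPT (I : seq R) (m : nat) : Prop :=
  packable I m /\ forall k, packable I k -> (m <= k)%N.

(* One decision of the algorithm: take the head (largest) or tail (smallest)
   remaining item; first close the bins with indices in [to_close]; then pack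
   the item into the open bin [Some i] or into a new bin [None]. *)
Record Step := mkStep { take_head : bool; to_close : seq nat; target : option nat }.

(* A configuration: list of bins (contents, is_open). *)
Definition Config := seq (seq R * bool).

(* A deterministic max-min algorithm: its decision depends only on the items
   already packed (with its own previous decisions) and the current head and
   tail items. *)
Definition maxmin_alg := seq (R * Step) -> R -> R -> Step.

Definition close_bins (cl : seq nat) (c : Config) : Config :=
  mkseq (fun i => let b := nth ([::], false) c i in
                  if i \in cl then (b.1, false) else b) (size c).

Definition place (x : R) (t : option nat) (c : Config) : option Config :=
  match t with
  | None => Some (rcons c ([:: x], true))
  | Some i =>
      let b := nth ([::], false) c i in
      if [&& (i < size c)%N, b.2 & \sum_(y <- b.1) y + x <= 1]
      then Some (set_nth ([::], false) c i (rcons b.1 x, true))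
      else None
  end.

Definition do_step (B : nat) (x : R) (s : Step) (c : Config) : option Config :=
  match place x (target s) (close_bins (to_close s) c) with
  | Some c' => if (count (fun b => b.2) c' <= B)%N then Some c' else None
  | None => None
  end.

Fixpoint run (alg : maxmin_alg) (B : nat) (n : nat) (rem : seq R)
    (hist : seq (R * Step)) (c : Config) : option Config :=
  match n with
  | 0%N => Some c
  | n'.+1 =>
    match rem with
    | [::] => Some c
    | h :: r =>
      let t := last h r in
      let s := alg hist h t in
      let x := if take_head s then h else t in
      let rem' := if take_head s then r else belast h r in
      match do_step B x s c with
      | None => None
      | Some c' => run alg B n' rem' (rcons hist (x, s)) c'
      end
    end
  end.

Definition pack (alg : maxmin_alg) (B : nat) (I : seq R) : option Config :=
  run alg B (size I) (sort (fun x y => y <= x) I) [::] [::].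

Definition bounded_space (alg : maxmin_alg) (B : nat) : Prop :=
  forall I : seq R, valid_items I -> pack alg B I <> None.

Definition ALG (alg : maxmin_alg) (B : nat) (I : seq R) : nat :=
  size (odflt [::] (pack alg B I)).

End BinPacking.

(* Main.v *)
Require Import Defs.
From HB Require Import structures.
From mathcomp Require Import all_boot all_order all_algebra.
From mathcomp Require Import reals.
From mathcomp Require Import lra zify.
Import Order.TTheory GRing.Theory Num.Theory.
Local Open Scope ring_scope.


Lemma count_set_nth_le (T : Type) (p q : pred T) (x0 : T) s i v :
  (i < size s)%N -> subpred p q -> (p v -> q (nth x0 s i)) ->
  (count p (set_nth x0 s i v) <= count q s)%N.
Proof.
elim: s i => [|y s IH] [|i] //= Hi Hpq Hv.
  by apply: leq_add => //; [case: (p v) Hv => // /(_ isT) ->| apply: sub_count].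
apply: leq_add; first by case: (p y) (Hpq y) => // /(_ isT) ->.
exact: IH.
Qed.

Lemma sum_set_nth (T : Type) (F : T -> nat) x0 s i v : (i < size s)%N ->
  (\sum_(t <- set_nth x0 s i v) F t + F (nth x0 s i) = \sum_(t <- s) F t + F v)%N.
Proof.
elim: s i => [|y s IH] [|i] //= Hi; rewrite !big_cons.
  lia.
have := IH i Hi; lia.
Qed.

Lemma all_set_nth (T : Type) (P : pred T) x0 s i v : (i < size s)%N ->
  all P s -> P v -> all P (set_nth x0 s i v).
Proof.
elim: s i => [|y s IH] [|i] //= Hi /andP [Py Ps] Pv; first by rewrite Pv Ps.
by rewrite Py IH.
Qed.

Lemma map_set_nth' (T U : Type) (f : T -> U) x0 s i v :
  map f (set_nth x0 s i v) = set_nth (f x0) (map f s) i (f v).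
Proof.
elim: s i => [|y s IH] [|i] //=; last by rewrite IH.
by elim: i => //= i ->.
Qed.

Section Proof.
Variable R : realType.

Definition vL : R := 52 / 100.
Definition vM : R := 29 / 100.
Definition vS : R := 19 / 100.

Lemma vLM : vL != vM. Proof. by apply/eqP; rewrite /vL /vM; lra. Qed.
Lemma vLS : vL != vS. Proof. by apply/eqP; rewrite /vL /vS; lra. Qed.
Lemma vMS : vM != vS. Proof. by apply/eqP; rewrite /vM /vS; lra. Qed.

Definition seg (a k b : nat) : seq R := nseq a vL ++ nseq k vM ++ nseq b vS.

Definition trans (a k b : nat) (x : R) (a' k' b' : nat) : Prop :=
  (x = vL /\ (0 < a)%N /\ a' = a.-1 /\ k' = k /\ b' = b) \/
  (x = vM /\ (0 < k)%N /\ ((a == 0)%N || (b == 0)%N) /\ a' = a /\ k' = k.-1 /\ b' = b) \/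
  (x = vS /\ (0 < b)%N /\ a' = a /\ k' = k /\ b' = b.-1).

Lemma nseqSr (n : nat) (y : R) : nseq n.+1 y = rcons (nseq n y) y.
Proof. by elim: n => //= n ->. Qed.

Lemma seg_head a k b h r : seg a k b = h :: r ->
  exists a' k' b', trans a k b h a' k' b' /\ seg a' k' b' = r.
Proof.
case: a => [|a].
  case: k => [|k].
    case: b => [|b] //= [<- <-].
    by exists 0%N, 0%N, b; split => //; right; right.
  move=> [<- <-]; exists 0%N, k, b; split => //; right; left; do !split => //.
by move=> [<- <-]; exists a, k, b; split => //; left.
Qed.

Lemma seg_tail a k b h r : seg a k b = h :: r ->
  exists a' k' b', trans a k b (last h r) a' k' b' /\ seg a' k' b' = belast h r.
Proof.
rewrite lastI => E.
case: b E => [|b].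
  case: k => [|k].
    case: a => [|a]; first by move=> /(congr1 size); rewrite size_rcons.
    have -> : seg a.+1 0 0 = nseq a.+1 vL by rewrite /seg /= cats0.
    rewrite nseqSr => /rcons_inj [<- <-].
    exists a, 0%N, 0%N; split; first by left. by rewrite /seg /= cats0.
  rewrite /seg cats0 nseqSr -rcons_cat => /rcons_inj [<- <-].
  exists a, k, 0%N; split; last by rewrite /seg cats0.
  by right; left; do !split => //; rewrite eqxx orbT.
rewrite /seg nseqSr -!rcons_cat => /rcons_inj [<- <-].
by exists a, k, b; split => //; right; right.
Qed.


Lemma close_fst (cl : seq nat) (c : Config R) :
  map fst (close_bins cl c) = map fst c.
Proof.
rewrite /close_bins.
apply: (@eq_from_nth _ [::]); first by rewrite !size_map size_iota.
move=> i; rewrite size_map size_mkseq => Hi.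
rewrite (nth_map ([::], false)) ?size_mkseq // nth_mkseq //.
rewrite (nth_map ([::], false)) //.
by case: ifP.
Qed.

Lemma size_close (cl : seq nat) (c : Config R) : size (close_bins cl c) = size c.
Proof. by rewrite /close_bins size_mkseq. Qed.

Lemma nth_close (cl : seq nat) (c : Config R) i : (i < size c)%N ->
  nth ([::], false) (close_bins cl c) i =
  if i \in cl then ((nth ([::], false) c i).1, false) else nth ([::], false) c i.
Proof. by move=> Hi; rewrite /close_bins nth_mkseq. Qed.

Lemma close_count (cl : seq nat) (c : Config R) (P Q : pred (seq R * bool)) :
  (forall bn, P (bn.1, false) -> Q bn) -> subpred P Q ->
  (count P (close_bins cl c) <= count Q c)%N.
Proof.
move=> H1 H2; rewrite /close_bins /mkseq count_map.
have -> : count Q c = count (preim (nth ([::], false) c) Q) (iota 0 (size c)).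
  by rewrite -count_map -/(mkseq _ _) mkseq_nth.
apply: sub_count => i /=; case: ifP => _; [exact: H1 | exact: H2].
Qed.


Definition isLMS (y : R) : bool := (y == vL) || (y == vM) || (y == vS).
Definition okbin (s : seq R) : bool := all isLMS s && (\sum_(y <- s) y <= 1).
Definition cnt (y : R) (c : Config R) : nat := (\sum_(s <- map fst c) count_mem y s)%N.
Definition LMS (s : seq R) : bool := [&& vL \in s, vM \in s & vS \in s].
Definition dang (a k b : nat) (bn : seq R * bool) : bool :=
  LMS bn.1 || [&& bn.2, (vL \in bn.1) || (0 < a)%N, (vM \in bn.1) || (0 < k)%N
                & (vS \in bn.1) || (0 < b)%N].
Definition Inv (m B a k b : nat) (c : Config R) : Prop :=
  [/\ all okbin (map fst c), (cnt vL c + a = m)%N, (cnt vM c + k = m)%N,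
      (cnt vS c + b = m)%N &
      ((0 < a)%N -> (0 < b)%N -> k = m) /\ (count (dang a k b) c <= B)%N].

Lemma eLM : (vL == vM) = false. Proof. exact/negbTE/vLM. Qed.
Lemma eML : (vM == vL) = false. Proof. by rewrite eq_sym eLM. Qed.
Lemma eLS : (vL == vS) = false. Proof. exact/negbTE/vLS. Qed.
Lemma eSL : (vS == vL) = false. Proof. by rewrite eq_sym eLS. Qed.
Lemma eMS : (vM == vS) = false. Proof. exact/negbTE/vMS. Qed.
Lemma eSM : (vS == vM) = false. Proof. by rewrite eq_sym eMS. Qed.

Lemma dang_mono a k b a' k' b' bn : (a' <= a)%N -> (k' <= k)%N -> (b' <= b)%N ->
  dang a' k' b' bn -> dang a k b bn.
Proof.
move=> h1 h2 h3; rewrite /dang; case: (LMS _) => //=; case: bn.2 => //=.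
case: (vL \in _); case: (vM \in _); case: (vS \in _) => //=;
  do ?[move=> /andP [] ]; do ?move=> ?; do ?(apply/andP; split); lia.
Qed.

Lemma trans_le a k b x a' k' b' : trans a k b x a' k' b' ->
  [/\ (a' <= a)%N, (k' <= k)%N & (b' <= b)%N].
Proof. case=> [[_ [_ [-> [-> ->]]]]|[[_ [_ [_ [-> [-> ->]]]]]|[_ [_ [-> [-> ->]]]]]]; split; lia. Qed.

Lemma new_not_dang a k b x a' k' b' : ((a == 0)%N || (b == 0)%N) ->
  trans a k b x a' k' b' -> ~~ dang a' k' b' ([:: x], true).
Proof.
move=> /orP Hab.
case=> [[-> [Ha [-> [-> ->]]]]|[[-> [Hk [_ [-> [-> ->]]]]]|[-> [Hb [-> [-> ->]]]]]];
  rewrite /dang /LMS /= !inE ?eqxx ?eLM ?eML ?eLS ?eSL ?eMS ?eSM /=;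
  case: Hab => /eqP H; subst => //=; rewrite ?andbF //.
Qed.

Lemma placed_dang a k b x a' k' b' s0 : trans a k b x a' k' b' ->
  dang a' k' b' (rcons s0 x, true) -> dang a k b (s0, true).
Proof.
case=> [[-> [Ha [-> [-> ->]]]]|[[-> [Hk [_ [-> [-> ->]]]]]|[-> [Hb [-> [-> ->]]]]]];
  rewrite /dang /LMS /= !mem_rcons !inE ?eqxx ?eLM ?eML ?eLS ?eSL ?eMS ?eSM /=;
  case: (vL \in _); case: (vM \in _); case: (vS \in _) => //=;
  do ?[move=> /andP [] ]; do ?move=> ?; do ?(apply/andP; split); lia.
Qed.

Lemma count_dang_open a k b (c : Config R) :
  all (fun s => count_mem vM s == 0)%N (map fst c) ->
  (count (dang a k b) c <= count (fun bn => bn.2) c)%N.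
Proof.
elim: c => [|bn c IH] //= /andP [H0 H1].
apply: leq_add; last exact: IH.
have : vM \notin bn.1 by apply/count_memPn/eqP.
move: H0; case: bn => s o /= _; rewrite /dang /LMS /=; case: (vM \in s) => //= _.
by rewrite andbF /=; case: o => //=; case: (_ && _).
Qed.

Lemma cnt_rcons y (c : Config R) bn : cnt y (rcons c bn) = (cnt y c + count_mem y bn.1)%N.
Proof. by rewrite /cnt map_rcons big_rcons. Qed.

Lemma cnt_set_nth y (c : Config R) i v : (i < size c)%N ->
  (cnt y (set_nth ([::], false) c i v) + count_mem y (nth ([::], false) c i).1
   = cnt y c + count_mem y v.1)%N.
Proof.
move=> Hi; rewrite /cnt map_set_nth' -(nth_map ([::], false) [::]) //.
by rewrite (@sum_set_nth _ (fun s => count_mem y s)) // size_map.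
Qed.

Lemma cnt_close y cl (c : Config R) : cnt y (close_bins cl c) = cnt y c.
Proof. by rewrite /cnt close_fst. Qed.

Lemma count_mem_rcons (y x : R) s : count_mem y (rcons s x) = (count_mem y s + (x == y))%N.
Proof. by rewrite -cats1 count_cat /= addn0. Qed.

Lemma step_inv m B a k b x a' k' b' s (c c' : Config R) :
  Inv m B a k b c -> trans a k b x a' k' b' -> do_step B x s c = Some c' ->
  Inv m B a' k' b' c'.
Proof.
move=> [Hok HL HM HS [Hph Hd]] Htr.
rewrite /do_step.
set cc := close_bins (to_close s) c.
have Hcf : map fst cc = map fst c := close_fst _ _.
have Hsz : size cc = size c := size_close _ _.
have Hx : isLMS x.
  by case: Htr => [[->]|[[->]|[->]]] _; rewrite /isLMS eqxx ?orbT.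
have Hx1 : x <= 1.
  by case: Htr => [[->]|[[->]|[->]]] _; rewrite /vL /vM /vS; lra.
have [Hle1 Hle2 Hle3] := @trans_le _ _ _ _ _ _ _ Htr.
case Hpl: (place x (target s) cc) => [c''|] //; case: ifP => // Hopen [<-].
have Hcnt : forall y, cnt y c'' = (cnt y c + (x == y))%N.
  move=> y; rewrite -(cnt_close y (to_close s) c) -/cc.
  move: Hpl; rewrite /place; case: (target s) => [i|] /=; last first.
    by move=> [<-]; rewrite cnt_rcons /= addn0.
  case: ifP => // /and3P [Hi _ _] [<-].
  have := @cnt_set_nth y cc i (rcons (nth ([::], false) cc i).1 x, true) Hi.
  by rewrite /= count_mem_rcons addnCA [in X in X = _ -> _]addnC => /addnI.
have Hok' : all okbin (map fst c'').
  move: Hpl; rewrite /place; case: (target s) => [i|] /=; last first.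
    move=> [<-]; rewrite map_rcons all_rcons Hcf Hok andbT /okbin /= Hx big_seq1.
    exact: Hx1.
  case: ifP => // /and3P [Hi _ Hsum] [<-].
  rewrite map_set_nth'; apply: all_set_nth; [by rewrite size_map | by rewrite Hcf | ].
  have : okbin (nth ([::], false) cc i).1.
    by rewrite -(nth_map _ [::]) // Hcf; apply: (all_nthP [::] Hok); rewrite -Hcf size_map.
  rewrite /okbin all_rcons Hx big_rcons /= => /andP [-> _].
  exact: Hsum.
have Ha0 : trans a k b x a' k' b' := Htr.
split => //.
- by rewrite Hcnt; case: Htr => [[-> [Ha [-> _]]]|[[-> [_ [_ [-> _]]]]|[-> [_ [-> _]]]]];
    rewrite ?eqxx ?eML ?eSL /=; lia.
- by rewrite Hcnt; case: Htr => [[-> [_ [_ [-> _]]]]|[[-> [Hk [_ [_ [-> _]]]]]|[-> [_ [_ [-> _]]]]]];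
    rewrite ?eqxx ?eLM ?eSM /=; lia.
- by rewrite Hcnt; case: Htr => [[-> [_ [_ [_ ->]]]]|[[-> [_ [_ [_ [_ ->]]]]]|[-> [Hb [_ [_ ->]]]]]];
    rewrite ?eqxx ?eLS ?eMS /=; lia.
split.
  case: Htr => [[_ [Ha [-> [-> ->]]]]|[[_ [Hk [Hab [-> [-> ->]]]]]|[_ [Hb [-> [-> ->]]]]]].
  - move=> h1 h2; apply: Hph => //; lia.
  - by move=> h1 h2; case/orP: Hab => /eqP; lia.
  - move=> h1 h2; apply: Hph => //; lia.
case: (boolP ((0 < a)%N && (0 < b)%N)) => [/andP [Ha Hb]|Hab].
  have Hkm := Hph Ha Hb.
  have HM0 : cnt vM c = 0%N by lia.
  have HxM : (x == vM) = false.
    case: Htr => [[->]|[[-> [_ [Hab _]]]|[->]]] //; rewrite ?eLM ?eSM //.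
    by case/orP: Hab => /eqP; lia.
  apply: leq_trans Hopen; apply: count_dang_open.
  have : (cnt vM c'' == 0)%N by rewrite Hcnt HM0 HxM.
  by rewrite /cnt sum_nat_seq_eq0.
have Hab' : ((a == 0)%N || (b == 0)%N) by move: Hab; rewrite negb_and -!leqNgt !leqn0.
apply: leq_trans Hd.
apply: (@leq_trans (count (dang a k b) cc)); last first.
  apply: close_count => // bn; rewrite /dang /=; case: (LMS _) => //.
move: Hpl; rewrite /place; case: (target s) => [i|] /=; last first.
  move=> [<-]; rewrite -cats1 count_cat /= (negbTE (@new_not_dang _ _ _ _ _ _ _ Hab' Htr)) addn0.
  by rewrite addn0; apply: sub_count => bn; apply: dang_mono.
case: ifP => // /and3P [Hi Hop _] [<-].
apply: count_set_nth_le => //.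
  by move=> bn; apply: dang_mono.
move=> /(@placed_dang _ _ _ _ _ _ _ _ Htr).
by case: (nth _ cc i) Hop => s0 o /= ->.
Qed.

Lemma trans_size a k b x a' k' b' : trans a k b x a' k' b' ->
  (a' + k' + b').+1 = (a + k + b)%N.
Proof. case=> [[_ [Ha [-> [-> ->]]]]|[[_ [Hk [_ [-> [-> ->]]]]]|[_ [Hb [-> [-> ->]]]]]]; lia. Qed.

Arguments seg_head {a k b h r}.
Arguments seg_tail {a k b h r}.
Arguments trans_size {a k b x a' k' b'}.
Arguments step_inv {m B a k b x a' k' b' s c c'}.

Lemma run_inv (alg : maxmin_alg R) m B : forall n a k b hist (c c' : Config R),
  run alg B n (seg a k b) hist c = Some c' -> (a + k + b <= n)%N ->
  Inv m B a k b c -> Inv m B 0 0 0 c'.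
Proof.
elim=> [|n IH] a k b hist c c' /=.
  move=> [<-] Hn; have Ha : a = 0%N by lia.
  have Hk : k = 0%N by lia. have Hb : b = 0%N by lia.
  by subst.
case E: (seg a k b) => [|h r].
  move=> [<-] _; have : size (seg a k b) = 0%N by rewrite E.
  rewrite /seg !size_cat !size_nseq => Hs.
  have Ha : a = 0%N by lia.
  have Hk : k = 0%N by lia. have Hb : b = 0%N by lia.
  by subst.
case Hth: (take_head (alg hist h (last h r))).
  have [a' [k' [b' [Htr Er]]]] := seg_head E.
  case Hds: (do_step B h _ c) => [c1|] // Hrun Hn HI.
  rewrite -Er in Hrun; apply: (IH _ _ _ _ _ _ Hrun).
    by have := trans_size Htr; lia.
  exact: step_inv HI Htr Hds.
have [a' [k' [b' [Htr Er]]]] := seg_tail E.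
case Hds: (do_step B (last h r) _ c) => [c1|] // Hrun Hn HI.
rewrite -Er in Hrun; apply: (IH _ _ _ _ _ _ Hrun).
  by have := trans_size Htr; lia.
exact: step_inv HI Htr Hds.
Qed.

Lemma sum_LMS (s : seq R) : all isLMS s ->
  \sum_(y <- s) y = (count_mem vL s)%:R * vL + (count_mem vM s)%:R * vM
                    + (count_mem vS s)%:R * vS.
Proof.
elim: s => [|y s IH]; first by rewrite big_nil /= !mul0r !addr0.
rewrite /= => /andP [Hy Hs]; rewrite big_cons IH //.
move: Hy; rewrite /isLMS => /orP [/orP [] |] /eqP ->;
  rewrite ?eqxx ?eLM ?eML ?eLS ?eSL ?eMS ?eSM /= !natrD; lra.
Qed.

Lemma okbin_bound (s : seq R) : okbin s ->
  (4 * count_mem vL s + 2 * count_mem vM s + count_mem vS s <= 6 + LMS s)%N.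
Proof.
move=> /andP [Ha Hs]; move: Hs; rewrite sum_LMS // => Hs.
have H : ((count_mem vL s * 52 + count_mem vM s * 29 + count_mem vS s * 19)%N%:R
          <= (100%:R : R)).
  rewrite natrD natrD !natrM; move: Hs; rewrite /vL /vM /vS; lra.
rewrite ler_nat in H.
rewrite /LMS -!has_pred1 !has_count.
move: H; set l := count _ s; set mm := count _ s; set ss := count _ s => H.
have : (4 * l + 2 * mm + ss <= 6)%N \/ ((0 < l)%N /\ (0 < mm)%N /\ (0 < ss)%N /\ (4 * l + 2 * mm + ss <= 7)%N) by lia.
case=> [H1|[h1 [h2 [h3 h4]]]]; first by lia.
by rewrite h1 h2 h3.
Qed.

Lemma sum_bound (c : Config R) : all okbin (map fst c) ->
  (4 * cnt vL c + 2 * cnt vM c + cnt vS c <= 6 * size c + count (dang 0 0 0) c)%N.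
Proof.
elim: c => [|bn c IH] /=; first by rewrite /cnt !big_nil.
move=> /andP [Hb Hc]; have := IH Hc; have := @okbin_bound _ Hb; rewrite /cnt /= !big_cons.
have : (LMS bn.1 <= dang 0 0 0 bn)%N by rewrite /dang; case: (LMS _).
lia.
Qed.

Lemma final_bound m B (c : Config R) : Inv m B 0 0 0 c -> (7 * m <= 6 * size c + B)%N.
Proof.
move=> [Hok HL HM HS [_ Hd]]; have := @sum_bound _ Hok; lia.
Qed.

Lemma path_S (x : R) n : vS <= x -> path (fun x y => y <= x) x (nseq n vS).
Proof. elim: n x => [|n IH] x //= Hx; rewrite Hx /=; exact: IH. Qed.

Lemma path_MS (x : R) k b : vM <= x -> path (fun x y => y <= x) x (nseq k vM ++ nseq b vS).
Proof.
elim: k x => [|k IH] x //= Hx; last by rewrite Hx /=; exact: IH.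
by apply: path_S; apply: le_trans Hx; rewrite /vS /vM; lra.
Qed.

Lemma path_seg (x : R) a k b : vL <= x -> path (fun x y => y <= x) x (seg a k b).
Proof.
elim: a x => [|a IH] x //= Hx; last by rewrite Hx /=; exact: IH.
by apply: path_MS; apply: le_trans Hx; rewrite /vM /vL; lra.
Qed.

Lemma sorted_seg a k b : sorted (fun x y : R => y <= x) (seg a k b).
Proof. exact: path_sorted (path_seg vL a k b (lexx vL)). Qed.

Lemma valid_seg a k b : valid_items (seg a k b).
Proof.
have hL : (0 < vL) && (vL <= 1) by apply/andP; split; rewrite /vL; lra.
have hM : (0 < vM) && (vM <= 1) by apply/andP; split; rewrite /vM; lra.
have hS : (0 < vS) && (vS <= 1) by apply/andP; split; rewrite /vS; lra.
by rewrite /valid_items /seg !all_cat !all_nseq hL hM hS !orbT.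
Qed.

Lemma nth_seg0 a k b i : (i < a)%N -> nth 0 (seg a k b) i = vL.
Proof. by move=> Hi; rewrite /seg nth_cat size_nseq Hi nth_nseq Hi. Qed.

Lemma nth_seg1 a k b i : (i < k)%N -> nth 0 (seg a k b) (i + a) = vM.
Proof.
move=> Hi; have h1 : (i + a < a)%N = false by lia.
rewrite /seg nth_cat size_nseq h1 addnK.
by rewrite nth_cat size_nseq Hi nth_nseq Hi.
Qed.

Lemma nth_seg2 a k b i : (i < b)%N -> nth 0 (seg a k b) (i + a + k) = vS.
Proof.
move=> Hi; have h1 : (i + a + k < a)%N = false by lia.
have h2 : (i + a + k - a = i + k)%N by lia.
have h3 : (i + k < k)%N = false by lia.
by rewrite /seg nth_cat size_nseq h1 h2 nth_cat size_nseq h3 addnK nth_nseq Hi.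
Qed.

Lemma nth_seg_ge0 a k b i : 0 <= nth 0 (seg a k b) i.
Proof.
case: (ltnP i (size (seg a k b))) => [Hi|Hi]; last by rewrite nth_default.
have := valid_seg a k b; rewrite /valid_items => /(all_nthP 0) /(_ i Hi) /andP [h _].
exact: ltW.
Qed.

Lemma blk (F : nat -> R) m j t lo hi : (j < m)%N -> lo = (m * t)%N -> hi = (lo + m)%N ->
  \sum_(lo <= i < hi | (i %% m == j)%N) F i = F (j + m * t)%N.
Proof.
move=> Hj -> ->; rewrite -{1}[(m * t)%N]add0n big_addn addKn.
rewrite big_nat_cond (eq_bigl (fun i => (0 <= i < m)%N && (i == j))); last first.
  move=> i /=; case: (ltnP i m) => Hi /=; rewrite ?andbF //.
  by rewrite addnC mulnC modnMDl modn_small.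
by rewrite -big_nat_cond big_nat1_eq Hj.
Qed.

Lemma opt_seg m : (0 < m)%N -> is_OPT (seg m m m) m.
Proof.
move=> Hm; have Hsz : size (seg m m m) = (m * 2 + m)%N.
  by rewrite /seg !size_cat !size_nseq; lia.
split.
  exists (fun i : 'I_(size (seg m m m)) => Ordinal (ltn_pmod i Hm)).
  move=> j.
  rewrite (eq_bigl (fun i : 'I_(size (seg m m m)) => (i %% m == j)%N)) //.
  rewrite -(big_mkord (fun i => (i %% m == j)%N) (fun i => (seg m m m)`_i)) Hsz.
  rewrite (@big_cat_nat _ _ _ (m * 2)); try lia.
  rewrite (@big_cat_nat _ _ _ m); try lia.
  rewrite (@blk _ m j 0 0 m) ?muln0 //; try lia.
  rewrite (@blk _ m j 1 m (m * 2)) ?muln1 //; try lia.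
  rewrite (@blk _ m j 2 (m * 2) (m * 2 + m)) //.
  have -> : (j + m * 2 = j + m + m)%N by lia.
  rewrite addn0 nth_seg0 // nth_seg1 // nth_seg2 //.
  by change (vL + vM + vS <= 1); rewrite /vL /vM /vS; lra.
move=> k [f Hf].
have Hle : (m <= size (seg m m m))%N by rewrite Hsz; lia.
pose g := fun i : 'I_m => f (widen_ord Hle i).
have Hinj : injective g.
  move=> i1 i2 Hg; apply/eqP; apply/negPn/negP => Hne.
  have Hw : widen_ord Hle i2 != widen_ord Hle i1.
    by apply: contra Hne => /eqP [] E; apply/eqP/val_inj.
  have := Hf (g i1); rewrite (bigD1 (widen_ord Hle i1)) ?eqxx //=.
  rewrite (bigD1 (widen_ord Hle i2)) /=; last by rewrite -/(g i2) Hg eqxx Hw.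
  rewrite !nth_seg0 ?ltn_ord //.
  have : 0 <= \sum_(i | (f i == g i1) && (i != widen_ord Hle i1) && (i != widen_ord Hle i2))
                (seg m m m)`_i by apply: sumr_ge0 => i _; apply: nth_seg_ge0.
  by rewrite /vL; lra.
by have := leq_card g Hinj; rewrite !card_ord.
Qed.
End Proof.

Theorem theorem3 (R : realType) (B : nat) (alg : maxmin_alg R) (m : nat) :
  (0 < B)%N -> bounded_space alg B -> (0 < m)%N -> (2 * B <= m)%N -> (3 %| m)%N ->
  exists I : seq R,
    [/\ valid_items I, sorted_items I, is_OPT I m &
        7 / 6 * m%:R - B%:R <= (ALG alg B I)%:R :> R].
Proof.
move=> HB Hbs Hm H2B H3.
exists (seg R m m m); split.
- exact: valid_seg.
- exact: sorted_seg.
- exact: opt_seg.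
have Htr : transitive (fun x y : R => y <= x).
  by move=> y x z h1 h2; exact: le_trans h2 h1.
have := Hbs _ (valid_seg R m m m).
rewrite /ALG /pack (sorted_sort Htr (sorted_seg R m m m)).
case Hrun: (run alg B _ _ _ _) => [c'|] // _ /=.
have Hinit : Inv R m B m m m [::].
  by split; rewrite /cnt ?big_nil.
have Hsz : (m + m + m <= size (seg R m m m))%N.
  by rewrite /seg !size_cat !size_nseq; lia.
have HI := @run_inv R alg m B _ m m m [::] [::] c' Hrun Hsz Hinit.
have H := @final_bound R m B c' HI.
have H' : ((m * 7)%N%:R <= (size c' * 6 + B)%N%:R :> R) by rewrite ler_nat; lia.
rewrite natrD !natrM in H'.
have HB0 : 0 <= B%:R :> R by apply: ler0n.
lra.
Qed.
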